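(* (1) Let $R\subseteq S$ be rings with $S$ a free left $R$-module on a basis $T_S$, let $\alpha$ be a ring automorphism of $S$ and $\delta$ an $\alpha$-derivation of $S$, and let $S[x;\alpha,\delta]$ be the Ore extension. Let $0\ne g\in S[x;\alpha,\delta]$ and $p=\operatorname{lc}_S(g)$. Suppose that $p$ is $R$-nice and $\operatorname{ann}_R(p)=\operatorname{ann}_R(g)$ (this holds in particular whenever $g$ is $R$-nice), and that $\operatorname{ann}_S(p)=S\operatorname{ann}_R(p)$. Then $\operatorname{ann}_{S[x;\alpha,\delta]}(g)=S[x;\alpha,\delta]\operatorname{ann}_R(g)$. (2) Let $\mathbb S=R[X;\boldsymbol\alpha,\boldsymbol\delta]$ be a skew polynomial ring of bijective type over a well-ordered set of variables. Then every $R$-nice element $g\in\mathbb S$ satisfies $\operatorname{ann}_{\mathbb S}(g)=\mathbb S\operatorname{ann}_R(g)$.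
   Context: All annihilators are left annihilators: $\operatorname{ann}_B(u)=\{b\in B: bu=0\}$. Ore extension: $S[x;\alpha,\delta]$ is the free left $S$-module with basis $\{x^n:n\in\mathbb N\}$ and multiplication determined by $xs=\alpha(s)x+\delta(s)$, where $\delta(ab)=\alpha(a)\delta(b)+\delta(a)b$. Each $f\in S[x;\alpha,\delta]$ is uniquely $f=\sum_k p_kx^k$ with $p_k\in S$; $\deg_x(f)$ is the largest $k$ with $p_k\ne0$ and $\operatorname{lc}_S(f)=p_{\deg_x f}$. $S[x;\alpha,\delta]$ is a free left $R$-module with basis $\{\lambda x^n:\lambda\in T_S,n\in\mathbb N\}$. A non-zero element $f$ of a ring that is a free left $R$-module with a fixed basis is $R$-nice if, writing $f=\sum_i a_i\lambda_i$ with distinct basis elements $\lambda_i$ and non-zero $a_i\in R$, all the $\operatorname{ann}_R(a_i)$ coincide. Setting (M) for part (2): $R$ a ring, $\Omega$ an ordinal, $X=\{x_s:s<\Omega\}$; $T_\kappa$ the standard terms $x_{s_1}\cdots x_{s_n}$ with $s_1\le\cdots\le s_n<\kappa$, $T=T_\Omega$; $\mathbb S$ has subrings $\mathbb S_\kappa$ ($\kappa\le\Omega$) with $\mathbb S_0=R$, $\mathbb S_\Omega=\mathbb S$, $\mathbb S_\kappa$ free as left $R$-module on $T_\kappa$, $\mathbb S_{\kappa+1}=\mathbb S_\kappa[x_\kappa;\alpha_\kappa,\delta_\kappa]$ an Ore extension with $\alpha_\kappa$ an automorphism of $\mathbb S_\kappa$ and $\delta_\kappa$ an $\alpha_\kappa$-derivation,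 and $\mathbb S_\kappa=\bigcup_{\eta<\kappa}\mathbb S_\eta$ for limit $\kappa$; $R$-niceness in $\mathbb S$ refers to the basis $T$. *)

(* Defs.v *)
(* All rings live inside one ambient ring A; subrings are
   Prop-valued predicates on A (R ⊆ S ⊆ A identified with their images). *)
From HB Require Import structures.
From mathcomp Require Import all_boot all_order all_algebra.
Set Implicit Arguments. Unset Strict Implicit. Unset Printing Implicit Defensive.
Import Order.TTheory GRing.Theory.
Local Open Scope ring_scope.

Section Defs.
Variable A : pzRingType.

Definition subring (X : A -> Prop) : Prop :=
  X 1 /\ (forall a b, X a -> X b -> X (a - b)) /\ (forall a b, X a -> X b -> X (a * b)).

Definition lcomb (l : seq (A * A)) : A := \sum_(p <- l) p.1 * p.2.

Definition free_on (R M T : A -> Prop) : Prop :=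
  (forall t, T t -> M t) /\
  (forall m, M m -> exists l : seq (A * A),
       (forall p, p \in l -> R p.1 /\ T p.2) /\ uniq (map snd l) /\ m = lcomb l) /\
  (forall l : seq (A * A),
       (forall p, p \in l -> R p.1 /\ T p.2) -> uniq (map snd l) ->
       lcomb l = 0 -> forall p, p \in l -> p.1 = 0).

Definition ann (X : A -> Prop) (u : A) : A -> Prop := fun b => X b /\ b * u = 0.

Definition lspan (B X : A -> Prop) : A -> Prop :=
  fun h => exists l : seq (A * A), (forall p, p \in l -> B p.1 /\ X p.2) /\ h = lcomb l.

Definition same_set (P Q : A -> Prop) : Prop := forall h, P h <-> Q h.

Definition nice (R T : A -> Prop) (f : A) : Prop :=
  f != 0 /\
  forall l : seq (A * A),
    (forall p, p \in l -> R p.1 /\ p.1 != 0 /\ T p.2) -> uniq (map snd l) ->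
    f = lcomb l ->
    forall p q, p \in l -> q \in l -> same_set (ann R p.1) (ann R q.1).

(* E = S[x; alpha, delta] (internal description): S, E subrings, S ⊆ E, x ∈ E,
   alpha a ring automorphism of S, delta an alpha-derivation of S,
   x s = alpha(s) x + delta(s), and E is the free left S-module on {x^n}. *)
Definition is_ore_ext (S E : A -> Prop) (x : A) (alpha delta : A -> A) : Prop :=
  subring S /\ subring E /\ (forall s, S s -> E s) /\ E x /\
  (forall s, S s -> S (alpha s)) /\
  (forall a b, S a -> S b -> alpha (a + b) = alpha a + alpha b) /\
  (forall a b, S a -> S b -> alpha (a * b) = alpha a * alpha b) /\
  alpha 1 = 1 /\
  (forall a b, S a -> S b -> alpha a = alpha b -> a = b) /\
  (forall b, S b -> exists a, S a /\ alpha a = b) /\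
  (forall s, S s -> S (delta s)) /\
  (forall a b, S a -> S b -> delta (a + b) = delta a + delta b) /\
  (forall a b, S a -> S b -> delta (a * b) = alpha a * delta b + delta a * b) /\
  (forall s, S s -> x * s = alpha s * x + delta s) /\
  (forall f, E f -> exists (n : nat) (q : nat -> A),
       (forall k, S (q k)) /\ f = \sum_(k < n) q k * x ^+ k) /\
  (forall (n : nat) (q : nat -> A), (forall k, S (q k)) ->
       \sum_(k < n) q k * x ^+ k = 0 -> forall k, (k < n)%N -> q k = 0).

Definition is_lc (S : A -> Prop) (x g p : A) : Prop :=
  exists (n : nat) (q : nat -> A), (forall k, S (q k)) /\
    g = \sum_(k < n.+1) q k * x ^+ k /\ q n != 0 /\ p = q n.

End Defs.

Definition std_terms (d : Order.disp_t) (I : orderType d) (A : pzRingType)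
  (xs : I -> A) (P : I -> Prop) : A -> Prop :=
  fun h => exists l : seq I, sorted (fun a b => (a <= b)%O) l /\
     (forall s, s \in l -> P s) /\ h = \prod_(s <- l) xs s.

(* Main.v *)
Require Import Defs.
From mathcomp Require Import all_boot all_order all_algebra.
Set Implicit Arguments. Unset Strict Implicit. Unset Printing Implicit Defensive.
Import Order.TTheory GRing.Theory.
Local Open Scope ring_scope.

Section SubringFacts.
Variable A : pzRingType.
Variable S : A -> Prop.
Hypothesis sS : subring S.
Lemma sub1 : S 1. Proof. by case: sS. Qed.
Lemma subB a b : S a -> S b -> S (a - b). Proof. by case: sS => _ [H _]; apply: H. Qed.
Lemma subM a b : S a -> S b -> S (a * b). Proof. by case: sS => _ [_ H]; apply: H. Qed.
Lemma sub0 : S 0. Proof. by rewrite -(subrr 1); apply: subB; apply: sub1. Qed.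
Lemma subN a : S a -> S (- a). Proof. by move=> Ha; rewrite -sub0r; apply: subB => //; apply: sub0. Qed.
Lemma subD a b : S a -> S b -> S (a + b).
Proof. by move=> Ha Hb; rewrite -(opprK b); apply: subB => //; apply: subN. Qed.
Lemma subX a k : S a -> S (a ^+ k).
Proof. move=> Ha; elim: k => [|k IH]; first by rewrite expr0; apply: sub1. by rewrite exprS; apply: subM. Qed.
End SubringFacts.

Section Lspan.
Variable A : pzRingType.
Lemma lspan0 (B X : A -> Prop) : lspan B X 0.
Proof. by exists [::]; split => //; rewrite /lcomb big_nil. Qed.
Lemma lspanD (B X : A -> Prop) a b : lspan B X a -> lspan B X b -> lspan B X (a + b).
Proof.
move=> [l1 [H1 ->]] [l2 [H2 ->]]; exists (l1 ++ l2); split; last by rewrite /lcomb big_cat.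
by move=> p; rewrite mem_cat => /orP [] ?; [apply: H1 | apply: H2].
Qed.
Lemma lspan_mull (B B' X : A -> Prop) c a : (forall b, B b -> B' (c * b)) ->
  lspan B X a -> lspan B' X (c * a).
Proof.
move=> HB [l [Hl ->]]; exists (map (fun p => (c * p.1, p.2)) l); split.
  move=> p /mapP [q /Hl [Hq1 Hq2] ->] /=; split => //; exact: HB.
by rewrite /lcomb big_map mulr_sumr; apply: eq_bigr => p _; rewrite mulrA.
Qed.
Lemma lspan_mono (B B' X X' : A -> Prop) a : (forall b, B b -> B' b) -> (forall b, X b -> X' b) ->
  lspan B X a -> lspan B' X' a.
Proof. move=> HB HX [l [Hl ->]]; exists l; split => // p /Hl [] ? ?; split; auto. Qed.
Lemma lspan_ann (B R : A -> Prop) g a : lspan B (ann R g) a -> a * g = 0.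
Proof.
move=> [l [Hl ->]]; rewrite /lcomb mulr_suml big1_seq // => p /Hl [_ [_ H]].
by rewrite -mulrA H mulr0.
Qed.
End Lspan.

Section Ore.
Variable A : pzRingType.
Variables (S E : A -> Prop) (x : A) (alpha delta : A -> A).
Hypothesis H : is_ore_ext S E x alpha delta.

Ltac dH := case: H => sS [sE [SE [Ex [aS [aD [aM [a1 [ainj [asurj [dS [dD [dM [comm [rep uniq]]]]]]]]]]]]]].
Lemma oS : subring S. Proof. by dH. Qed.
Lemma oE : subring E. Proof. by dH. Qed.
Lemma oSE s : S s -> E s. Proof. dH; exact: SE. Qed.
Lemma oEx : E x. Proof. by dH. Qed.
Lemma oaS s : S s -> S (alpha s). Proof. dH; exact: aS. Qed.
Lemma oaD a b : S a -> S b -> alpha (a + b) = alpha a + alpha b.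
Proof. dH; exact: aD. Qed.
Lemma oaM a b : S a -> S b -> alpha (a * b) = alpha a * alpha b.
Proof. dH; exact: aM. Qed.
Lemma oainj a b : S a -> S b -> alpha a = alpha b -> a = b.
Proof. dH; exact: ainj. Qed.
Lemma oasurj b : S b -> exists a, S a /\ alpha a = b.
Proof. dH; exact: asurj. Qed.
Lemma odS s : S s -> S (delta s).
Proof. dH; exact: dS. Qed.
Lemma ocomm s : S s -> x * s = alpha s * x + delta s.
Proof. dH; exact: comm. Qed.
Lemma orep f : E f -> exists (n : nat) (q : nat -> A),
       (forall k, S (q k)) /\ f = \sum_(k < n) q k * x ^+ k.
Proof. dH; exact: rep. Qed.
Lemma ouniq (n : nat) (q : nat -> A) : (forall k, S (q k)) ->
       \sum_(k < n) q k * x ^+ k = 0 -> forall k, (k < n)%N -> q k = 0.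
Proof. dH; exact: uniq. Qed.

Lemma oa0 : alpha 0 = 0.
Proof.
have S0 := sub0 oS.
have := oaD S0 S0; rewrite addr0.
by move/(congr1 (fun y => y - alpha 0)); rewrite subrr addrK => <-.
Qed.

Definition lowdeg (N : nat) (h : A) :=
  exists q : nat -> A, (forall k, S (q k)) /\ h = \sum_(k < N) q k * x ^+ k.

Lemma L0 N : lowdeg N 0.
Proof. exists (fun _ => 0); split => [k|]; first exact: sub0 oS. by rewrite big1 // => i _; rewrite mul0r. Qed.

Lemma LD N a b : lowdeg N a -> lowdeg N b -> lowdeg N (a + b).
Proof.
move=> [q1 [H1 ->]] [q2 [H2 ->]]; exists (fun k => q1 k + q2 k); split.
  by move=> k; apply: subD; [exact: oS|apply: H1|apply: H2].
by rewrite -big_split; apply: eq_bigr => i _; rewrite mulrDl.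
Qed.

Lemma LN N a : lowdeg N a -> lowdeg N (- a).
Proof.
move=> [q [Hq ->]]; exists (fun k => - q k); split; first by move=> k; apply: subN; [exact: oS|].
by rewrite -sumrN; apply: eq_bigr => i _; rewrite mulNr.
Qed.

Lemma LB N a b : lowdeg N a -> lowdeg N b -> lowdeg N (a - b).
Proof. by move=> ? ?; apply: LD => //; apply: LN. Qed.

Lemma Lsum N (I : Type) (r : seq I) (P : pred I) (F : I -> A) :
  (forall i, P i -> lowdeg N (F i)) -> lowdeg N (\sum_(i <- r | P i) F i).
Proof. move=> HF; apply: (big_ind (lowdeg N)) => //; [exact: L0 | exact: LD]. Qed.

Lemma Lmon N c k : S c -> (k < N)%N -> lowdeg N (c * x ^+ k).
Proof.
move=> Hc Hk; exists (fun i => if i == k then c else 0); split.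
  by move=> i; case: ifP => _ //; exact: sub0 oS.
rewrite (bigD1 (Ordinal Hk)) //= eqxx big1 ?addr0 // => i /negbTE Hi.
have -> : (i == k :> nat) = false by apply/negbTE; apply: contraFneq Hi => E1; apply/eqP/val_inj.
by rewrite mul0r.
Qed.

Lemma Lmono N M h : (N <= M)%N -> lowdeg N h -> lowdeg M h.
Proof.
move=> HNM [q [Hq ->]]; apply: Lsum => i _; apply: Lmon => //.
exact: leq_trans (ltn_ord i) HNM.
Qed.

Lemma Lscal N s h : S s -> lowdeg N h -> lowdeg N (s * h).
Proof.
move=> Hs [q [Hq ->]]; rewrite mulr_sumr; apply: Lsum => i _; rewrite mulrA.
by apply: Lmon => //; apply: subM; [exact: oS| |].
Qed.

Lemma Lrx N j h : lowdeg N h -> lowdeg (N + j) (h * x ^+ j).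
Proof.
move=> [q [Hq ->]]; rewrite mulr_suml; apply: Lsum => i _; rewrite -mulrA -exprD.
by apply: Lmon => //; rewrite ltn_add2r.
Qed.

Lemma Lx N h : lowdeg N h -> lowdeg N.+1 (x * h).
Proof.
move=> [q [Hq ->]]; rewrite mulr_sumr; apply: Lsum => i _.
rewrite mulrA ocomm // mulrDl -mulrA -exprS; apply: LD.
  apply: Lmon; [exact: oaS | exact: (ltn_ord i)].
apply: Lmon; [exact: odS| ]; exact: ltnW (ltn_ord i).
Qed.

Lemma Lxp m N h : lowdeg N h -> lowdeg (N + m) (x ^+ m * h).
Proof.
move=> Hh; elim: m => [|m IH]; first by rewrite addn0 expr0 mul1r.
by rewrite exprS -mulrA addnS; apply: Lx.
Qed.

Lemma iterS' k s : S s -> S (iter k alpha s).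
Proof. by move=> Hs; elim: k => [|k IH] //=; apply: oaS. Qed.

Lemma iterM k a b : S a -> S b -> iter k alpha (a * b) = iter k alpha a * iter k alpha b.
Proof. by move=> Ha Hb; elim: k => [|k IH] //=; rewrite IH oaM //; apply: iterS'. Qed.

Lemma iter0 k : iter k alpha 0 = 0.
Proof. by elim: k => [|k IH] //=; rewrite IH oa0. Qed.

Lemma iterinj k a b : S a -> S b -> iter k alpha a = iter k alpha b -> a = b.
Proof.
move=> Ha Hb; elim: k => [|k IH] //= E1; apply: IH.
by apply: oainj => //; apply: iterS'.
Qed.

Lemma itersurj k b : S b -> exists a, S a /\ iter k alpha a = b.
Proof.
elim: k b => [|k IH] b Hb; first by exists b.
have [a [Ha <-]] := oasurj Hb; have [a' [Ha' <-]] := IH a Ha.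
by exists a'; split => //; rewrite iterSr.
Qed.

Lemma Lxs k s : S s -> exists L, lowdeg k L /\ x ^+ k * s = iter k alpha s * x ^+ k + L.
Proof.
move=> Hs; elim: k => [|k [L [HL E1]]].
  by exists 0; split; [apply: L0 | rewrite expr0 mul1r mulr1 addr0].
exists (delta (iter k alpha s) * x ^+ k + x * L); split.
  by apply: LD; [apply: Lmon; [apply: odS; apply: iterS'|] | apply: Lx].
rewrite exprS -mulrA E1 mulrDr mulrA ocomm; last exact: iterS'.
by rewrite mulrDl -mulrA addrA.
Qed.


Lemma Luniq M c L : S c -> lowdeg M L -> c * x ^+ M + L = 0 -> c = 0.
Proof.
move=> Hc [q [Hq ->]] Hs.
pose q' k := if (k < M)%N then q k else c.
have Hq' : forall k, S (q' k) by move=> k; rewrite /q'; case: ifP.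
have Hs' : \sum_(k < M.+1) q' k * x ^+ k = 0.
  rewrite big_ord_recr /= /q' ltnn -[RHS]Hs addrC; congr (_ + _).
  by apply: eq_bigr => i _; rewrite /= ltn_ord.
by have := ouniq Hq' Hs' (ltnSn M); rewrite /q' ltnn.
Qed.

Lemma lead_mul g n (q : nat -> A) c m : (forall k, S (q k)) -> g = \sum_(k < n.+1) q k * x ^+ k -> S c ->
  exists L, lowdeg (m + n) L /\ c * x ^+ m * g = c * iter m alpha (q n) * x ^+ (m + n) + L.
Proof.
move=> Hq -> Hc; rewrite big_ord_recr /=.
set G0 := \sum_(i < n) _.
have LG0 : lowdeg n G0 by exists q.
have [L' [HL' E2]] := Lxs m (Hq n).
exists (c * (x ^+ m * G0) + c * (L' * x ^+ n)); split.
  apply: LD; apply: Lscal => //; first by rewrite addnC; apply: Lxp.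
  exact: Lrx.
rewrite mulrDr (mulrA _ (q n)) -(mulrA c (x ^+ m)).
rewrite -(mulrA c (x ^+ m) (q n)) E2 mulrDr mulrDl exprD !mulrA; exact: addrCA.
Qed.

Lemma core (R : A -> Prop) g n (q : nat -> A) : (forall k, S (q k)) -> g = \sum_(k < n.+1) q k * x ^+ k ->
  (forall s, S s -> s * q n = 0 -> lspan S (ann R g) s) ->
  forall f, E f -> f * g = 0 -> lspan E (ann R g) f.
Proof.
move=> Hq Hg Hann f Ef.
have [N [qf [Hqf ->]]] := orep Ef.
suff: forall m f, lowdeg m f -> f * g = 0 -> lspan E (ann R g) f by apply; exists qf.
elim=> [|m IH] f0 [qq [Hqq ->]] Hfg; first by rewrite big_ord0; apply: lspan0.
move: Hfg; rewrite big_ord_recr /=.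
set F := \sum_(i < m) _; set c := qq m => Hfg.
have LF : lowdeg m F by exists qq.
have Sc : S c by apply: Hqq.
have [L1 [HL1 E1]] := lead_mul m Hq Hg Sc.
have LFg : lowdeg (m + n) (F * g).
  rewrite /F mulr_suml; apply: Lsum => i _.
  have [L [HL ->]] := lead_mul i Hq Hg (Hqq i).
  apply: LD; last by apply: Lmono HL; rewrite leq_add2r ltnW.
  apply: Lmon; last by rewrite ltn_add2r.
  exact (subM oS (Hqq i) (iterS' i (Hq n))).
have Sit : S (iter m alpha (q n)) by apply: iterS'.
have Hc0 : c * iter m alpha (q n) = 0.
  apply: (@Luniq (m + n) _ (L1 + F * g) (subM oS Sc Sit) (LD HL1 LFg)).
  by rewrite addrA -E1 addrC -mulrDl.
have [s [Hs Hcs]] := itersurj m Sc.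
have Hsq : s * q n = 0.
  apply: (@iterinj m); [exact (subM oS Hs (Hq n)) | exact: sub0 oS |].
  by rewrite iterM // Hcs iter0.
have Hsp := Hann s Hs Hsq.
have [L2 [HL2 E2]] := Lxs m Hs.
have EXm : forall b, S b -> E (x ^+ m * b).
  by move=> b Hb; exact (subM oE (@subX _ _ oE x m oEx) (oSE Hb)).
have Eq : F + c * x ^+ m = (F - L2) + x ^+ m * s.
  by rewrite E2 Hcs [c * _ + _]addrC addrA addrNK.
rewrite Eq; apply: lspanD; last exact: lspan_mull EXm Hsp.
apply: IH; first exact: LB.
have Hsg := lspan_ann Hsp.
have -> : F - L2 = (F + c * x ^+ m) - x ^+ m * s by rewrite Eq addrK.
by rewrite mulrBl Hfg -mulrA Hsg mulr0 subr0.
Qed.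

End Ore.

Section Free.
Variable A : pzRingType.
Variables (R M T : A -> Prop).
Hypothesis sR : subring R.
Hypothesis HF : free_on R M T.

Lemma rep_nz m : M m -> exists l : seq (A * A),
  (forall p, p \in l -> R p.1 /\ p.1 != 0 /\ T p.2) /\ uniq (map snd l) /\ m = lcomb l.
Proof.
case: HF => _ [Hrep _] /Hrep [l [Hl [Hu ->]]].
exists (filter (fun p => p.1 != 0) l); split; [|split].
- move=> p; rewrite mem_filter => /andP [Hp /Hl [? ?]]; by split.
- apply: subseq_uniq Hu; apply: map_subseq; exact: filter_subseq.
- rewrite /lcomb big_filter [LHS](bigID (fun p => p.1 != 0)) /= [X in _ + X]big1 ?addr0 //.
  by move=> p /negbNE/eqP ->; rewrite mul0r.
Qed.

Lemma ann_coef (l : seq (A * A)) r : (forall p, p \in l -> R p.1 /\ T p.2) -> uniq (map snd l) ->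
  R r -> r * lcomb l = 0 -> forall p, p \in l -> r * p.1 = 0.
Proof.
move=> Hl Hu Hr H0 p Hp.
case: HF => _ [_ Huniq].
pose l' := map (fun p => (r * p.1, p.2)) l.
have Hsnd : map snd l' = map snd l by rewrite /l' -map_comp.
apply: (Huniq l' _ _ _ (r * p.1, p.2)).
- move=> q /mapP [q0 /Hl [Hq1 Hq2] ->] /=; split => //; exact (subM sR Hr Hq1).
- by rewrite Hsnd.
- rewrite /lcomb /l' big_map /= -[RHS]H0 /lcomb mulr_sumr; by apply: eq_bigr => i _; rewrite mulrA.
- by apply/mapP; exists p.
Qed.

Definition cf (l : seq (A * A)) (t : A) := \sum_(p <- l | p.2 == t) p.1.

Lemma cf_mem (l : seq (A * A)) p : uniq (map snd l) -> p \in l -> cf l p.2 = p.1.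
Proof.
elim: l => [|a l IH] //= /andP [Ha Hu]; rewrite in_cons /cf big_cons.
case: (eqVneq p a) => [-> _ | Hpa /= Hp].
  rewrite eqxx big1_seq ?addr0 // => q /andP [/eqP Hq Hql].
  by move: Ha; rewrite -Hq; move/negP; case; apply/mapP; exists q.
have -> : (a.2 == p.2) = false.
  apply/negbTE; apply: contra Ha => /eqP ->; apply/mapP; by exists p.
exact: IH.
Qed.

Lemma cf_nmem (l : seq (A * A)) t : t \notin map snd l -> cf l t = 0.
Proof.
move=> Ht; rewrite /cf big1_seq // => q /andP [/eqP Hq Hql].
by move: Ht; rewrite -Hq; move/negP; case; apply/mapP; exists q.
Qed.

Lemma cf_R (l : seq (A * A)) t : (forall p, p \in l -> R p.1 /\ T p.2) -> R (cf l t).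
Proof.
move=> Hl; rewrite /cf big_seq_cond; apply: (big_ind R); [exact: sub0 sR | exact: subD sR |].
by move=> i /andP [/Hl [] ? _ _].
Qed.

Lemma cf_sum (l : seq (A * A)) (U : seq A) : uniq U -> {subset map snd l <= U} ->
  \sum_(t <- U) cf l t * t = lcomb l.
Proof.
move=> HU Hsub.
rewrite /cf /lcomb.
rewrite (eq_bigr (fun t => \sum_(i <- l | i.2 == t) i.1 * i.2)); last first.
  by move=> t _; rewrite mulr_suml; apply: eq_bigr => i /eqP ->.
rewrite (exchange_big_dep (fun _ => true)) //=.
apply: eq_big_seq => p Hp.
under eq_bigl => t do rewrite eq_sym.
have HpU : p.2 \in U by apply: Hsub; apply/mapP; exists p.
rewrite -big_filter.
have -> : [seq t <- U | t == p.2] = [:: p.2].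
  rewrite -(filter_pred1_uniq HU HpU); apply: eq_filter => t; by [].
by rewrite big_cons big_nil addr0.
Qed.

Lemma coef_unique (l1 l2 : seq (A * A)) :
  (forall p, p \in l1 -> R p.1 /\ p.1 != 0 /\ T p.2) -> uniq (map snd l1) ->
  (forall p, p \in l2 -> R p.1 /\ p.1 != 0 /\ T p.2) -> uniq (map snd l2) ->
  lcomb l1 = lcomb l2 -> forall p, p \in l2 -> p \in l1.
Proof.
move=> H1 U1 H2 U2 Heq p Hp.
have H1' : forall p, p \in l1 -> R p.1 /\ T p.2 by move=> q /H1 [? [? ?]].
have H2' : forall p, p \in l2 -> R p.1 /\ T p.2 by move=> q /H2 [? [? ?]].
pose U := undup (map snd (l1 ++ l2)).
pose L := map (fun t => (cf l1 t - cf l2 t, t)) U.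
case: HF => _ [_ Huniq].
have HUu : uniq U by apply: undup_uniq.
have HL : forall q, q \in L -> R q.1 /\ T q.2.
  move=> q /mapP [t Ht ->] /=; split; first by apply: (subB sR); apply: cf_R.
  move: Ht; rewrite mem_undup map_cat mem_cat => /orP [] /mapP [q' Hq' ->].
    by case: (H1' _ Hq').
  by case: (H2' _ Hq').
have HLu : uniq (map snd L) by rewrite /L -map_comp map_id.
have HL0 : lcomb L = 0.
  rewrite /lcomb /L big_map /=.
  under eq_bigr => t _ do rewrite mulrBl.
  rewrite sumrB !cf_sum // ?Heq ?subrr // => t Ht;
  by rewrite mem_undup map_cat mem_cat Ht ?orbT.
have HpU : p.2 \in U by rewrite mem_undup map_cat mem_cat; apply/orP; right; apply/mapP; exists p.
have Hc : cf l1 p.2 - cf l2 p.2 = 0.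
  by have := Huniq L HL HLu HL0 (cf l1 p.2 - cf l2 p.2, p.2); apply; apply/mapP; exists p.2.
move/eqP: Hc; rewrite subr_eq0 (cf_mem U2 Hp) => /eqP Hc.
case: (boolP (p.2 \in map snd l1)) => [/mapP [q Hq Hqp] | Hn]; last first.
  by move: Hc; rewrite cf_nmem //; case: (H2 _ Hp) => _ [Hne _] /esym /eqP; rewrite (negbTE Hne).
move: Hc; rewrite Hqp (cf_mem U1 Hq) => Hc.
by rewrite (surjective_pairing p) -Hc Hqp -surjective_pairing.
Qed.

End Free.

Section Ore2.
Variable A : pzRingType.
Variables (S E : A -> Prop) (x : A) (alpha delta : A -> A).
Hypothesis H : is_ore_ext S E x alpha delta.

Lemma sum_delta N j t : (j < N)%N ->
  \sum_(k < N) (if (k : nat) == j then t else 0) * x ^+ k = t * x ^+ j.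
Proof.
move=> Hj; rewrite (bigD1 (Ordinal Hj)) //= eqxx big1 ?addr0 // => i /negbTE Hi.
have -> : (i == j :> nat) = false by apply/negbTE; apply: contraFneq Hi => E1; apply/eqP/val_inj.
by rewrite mul0r.
Qed.

Lemma xinj t1 t2 k1 k2 : S t1 -> S t2 -> t1 != 0 -> t1 * x ^+ k1 = t2 * x ^+ k2 ->
  k1 = k2 /\ t1 = t2.
Proof.
move=> H1 H2 Hnz Heq.
pose q k := (if k == k1 then t1 else 0) - (if k == k2 then t2 else 0).
have Hq : forall k, S (q k).
  move=> k; apply: (subB (oS H)); case: ifP => _ //; exact: sub0 (oS H).
have h1 : (k1 < (maxn k1 k2).+1)%N by exact: leq_maxl.
have h2 : (k2 < (maxn k1 k2).+1)%N by exact: leq_maxr.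
have Hs : \sum_(k < (maxn k1 k2).+1) q k * x ^+ k = 0.
  rewrite /q; under eq_bigr => k _ do rewrite mulrBl.
  by rewrite sumrB (sum_delta _ h1) (sum_delta _ h2) Heq subrr.
have := ouniq H Hq Hs h1.
rewrite /q eqxx; case: eqP => [-> /eqP | _]; first by rewrite subr_eq0 => /eqP.
by rewrite subr0 => Ht; move: Hnz; rewrite Ht eqxx.
Qed.

Lemma top_rep g : g != 0 -> E g -> exists n (q : nat -> A),
  (forall k, S (q k)) /\ g = \sum_(k < n.+1) q k * x ^+ k /\ q n != 0.
Proof.
move=> Hg /(orep H) [N [q [Hq Hgq]]].
suff [n [Hn1 Hn2]] : exists n, g = \sum_(k < n.+1) q k * x ^+ k /\ q n != 0 by exists n, q.
elim: N Hgq => [|N IH]; first by rewrite big_ord0 => Hg0; move: Hg; rewrite Hg0 eqxx.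
rewrite big_ord_recr /=; case: (eqVneq (q N) 0) => [Hq0 | Hq0].
  by rewrite Hq0 mul0r addr0; apply: IH.
by move=> Hgq; exists N; split => //; rewrite big_ord_recr.
Qed.
End Ore2.

Section Stage.
Variable A : pzRingType.
Variables (R T TS S E : A -> Prop) (x : A) (alpha delta : A -> A).
Hypothesis sR : subring R.
Hypothesis HFg : free_on R (fun _ => True) T.
Hypothesis HFS : free_on R S TS.
Hypothesis Hore : is_ore_ext S E x alpha delta.
Hypothesis HTx : forall t k, TS t -> T (t * x ^+ k).
Hypothesis IHS : forall p f, nice R T p -> S p -> S f -> f * p = 0 -> lspan S (ann R p) f.

Lemma stage g f : nice R T g -> E g -> E f -> f * g = 0 -> lspan E (ann R g) f.
Proof.
move=> [gnz Hnice] Eg Ef Hfg.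
have [n [q [Hq [Hg Hqn]]]] := top_rep Hore gnz Eg.
have TSS : forall t, TS t -> S t by case: HFS => H1 _; exact: H1.
have TST : forall t, TS t -> T t by move=> t Ht; have := HTx 0 Ht; rewrite expr0 mulr1.
have TSnz : forall t, TS t -> t != 0.
  move=> t Ht; apply/negP => /eqP Ht0.
  case: HFS => _ [_ Hu].
  have := Hu [:: (1, t)] _ isT _ (1, t) (mem_head _ _) => /=.
  move=> H1; move: gnz; rewrite -(mul1r g) H1 ?mul0r ?eqxx //.
  - by move=> p; rewrite inE => /eqP -> /=; split => //; exact: sub1 sR.
  - by rewrite /lcomb big_cons big_nil Ht0 mulr0 addr0.
pose P k (l : seq (A * A)) := (forall p, p \in l -> R p.1 /\ p.1 != 0 /\ TS p.2) /\
   uniq (map snd l) /\ q k = lcomb l.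
have [Lf HLf] : exists Lf : nat -> seq (A * A), forall k, (k < n.+1)%N -> P k (Lf k).
  suff : forall N, exists Lf : nat -> seq (A * A), forall k, (k < N)%N -> P k (Lf k) by [].
  elim => [|N [Lf HLf]]; first by exists (fun _ => [::]).
  have [l Hl] := rep_nz HFS (Hq N).
  exists (fun k => if k == N then l else Lf k) => k.
  rewrite ltnS leq_eqVlt => /orP [/eqP -> | Hk]; first by rewrite eqxx.
  by rewrite (ltn_eqF Hk); apply: HLf.
pose lg ks := flatten (map (fun k => map (fun pr => (pr.1, pr.2 * x ^+ k)) (Lf k)) ks).
have L5 : forall ks pr, pr \in lg ks -> exists k pr0, k \in ks /\ pr0 \in Lf k /\
    pr = (pr0.1, pr0.2 * x ^+ k).
  elim => [|k ks IH] pr //=; rewrite mem_cat => /orP [/mapP [pr0 Hpr0 ->] | /IH [k' [pr0 [H1 [H2 H3]]]]].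
    by exists k, pr0; rewrite mem_head.
  by exists k', pr0; rewrite in_cons H1 orbT.
have L4 : forall ks k pr, k \in ks -> pr \in Lf k -> (pr.1, pr.2 * x ^+ k) \in lg ks.
  elim => [|k0 ks IH] k pr //=; rewrite in_cons mem_cat => /orP [/eqP -> Hpr | Hk Hpr].
    by rewrite (map_f (fun pr => (pr.1, pr.2 * x ^+ k0)) Hpr).
  by rewrite IH ?orbT.
have L3 : forall ks, all (fun k => k < n.+1)%N ks -> lcomb (lg ks) = \sum_(k <- ks) q k * x ^+ k.
  elim => [|k ks IH] /=; first by rewrite /lcomb !big_nil.
  move=> /andP [Hk Hks]; rewrite /lcomb big_cat big_cons /=; rewrite /lcomb in IH; rewrite IH //.
  congr (_ + _); case: (HLf k Hk) => _ [_ ->]; rewrite /lcomb big_map mulr_suml.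
  by apply: eq_bigr => i _; rewrite /= mulrA.
have L1 : forall ks, all (fun k => k < n.+1)%N ks -> forall pr, pr \in lg ks ->
    R pr.1 /\ pr.1 != 0 /\ T pr.2.
  move=> ks Hks pr /L5 [k [pr0 [H1 [H2 ->]]]] /=.
  have Hk : (k < n.+1)%N by move/allP: Hks; apply.
  by case: (HLf k Hk) => /(_ _ H2) [? [? ?]] _; split => //; split => //; apply: HTx.
have L2 : forall ks, all (fun k => k < n.+1)%N ks -> uniq ks -> uniq (map snd (lg ks)).
  elim => [|k ks IH] //= /andP [Hk Hks] /andP [Hkn Hu].
  rewrite map_cat cat_uniq IH // andbT; apply/andP; split.
    rewrite -map_comp /=.
    have -> : [seq (snd \o (fun pr => (pr.1, pr.2 * x ^+ k))) i | i <- Lf k] =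
              map (fun t => t * x ^+ k) (map snd (Lf k)) by rewrite -map_comp.
    case: (HLf k Hk) => HL [HLu _]; rewrite map_inj_in_uniq // => t1 t2 /mapP [p1 Hp1 ->] /mapP [p2 Hp2 ->].
    case: (HL _ Hp1) => _ [_ T1]; case: (HL _ Hp2) => _ [_ T2].
    by move=> /(xinj Hore (TSS _ T1) (TSS _ T2) (TSnz _ T1)) [].
  apply/hasPn => b /mapP [pr /L5 [k' [pr0 [Hk' [Hpr0 ->]]]] ->] /=.
  apply/negP => /mapP [pr2 /mapP [pr1 Hpr1 ->] /=].
  have Hk'n : (k' < n.+1)%N by move/allP: Hks; apply.
  case: (HLf k Hk) => HL _; case: (HLf k' Hk'n) => HL' _.
  case: (HL _ Hpr1) => _ [_ T1]; case: (HL' _ Hpr0) => _ [_ T0].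
  move=> /(xinj Hore (TSS _ T0) (TSS _ T1) (TSnz _ T0)) [Ekk _].
  by move: Hkn; rewrite -Ekk Hk'.
pose ks := index_iota 0 n.+1.
have Hks : all (fun k => k < n.+1)%N ks by apply/allP => k; rewrite mem_index_iota.
have Hksu : uniq ks by apply: iota_uniq.
have Hnks : n \in ks by rewrite mem_index_iota ltnSn.
have Hlg : g = lcomb (lg ks) by rewrite L3 // Hg big_mkord.
have hN := Hnice (lg ks) (L1 ks Hks) (L2 ks Hks Hksu) Hlg.
case: (HLf n (ltnSn n)) => HLn [HLnu HLnq].
have [pr0 Hpr0] : exists pr0, pr0 \in Lf n.
  case E0 : (Lf n) => [|a l]; last by exists a; rewrite mem_head.
  by move: Hqn; rewrite HLnq E0 /lcomb big_nil eqxx.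
have N2 : forall r, ann R (q n) r -> ann R g r.
  move=> r [Hr Hrq]; split => //.
  have HLn' : forall p, p \in Lf n -> R p.1 /\ TS p.2 by move=> p /HLn [? [? ?]].
  rewrite HLnq in Hrq.
  have Hr0 := ann_coef sR HFS HLn' HLnu Hr Hrq Hpr0.
  rewrite Hlg /lcomb mulr_sumr big1_seq // => pr /andP [_ Hpr].
  have [_ Hrp] := (hN _ _ (L4 ks n pr0 Hnks Hpr0) Hpr r).1 (conj Hr Hr0).
  by rewrite mulrA Hrp mul0r.
have N1 : nice R T (q n).
  split => // l' Hl' Hu' Hqe a b Ha Hb.
  have HLnT : forall p, p \in Lf n -> R p.1 /\ p.1 != 0 /\ T p.2.
    by move=> p /HLn [? [? ?]]; split => //; split => //; apply: TST.
  have Hab := coef_unique sR HFg HLnT HLnu Hl' Hu'.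
  rewrite -HLnq -Hqe in Hab.
  exact: hN (L4 ks n a Hnks (Hab erefl a Ha)) (L4 ks n b Hnks (Hab erefl b Hb)).
apply: (core Hore Hq Hg _ Ef Hfg) => s Ss Hsq.
apply: (lspan_mono (fun b (hb : S b) => hb) N2).
exact: IHS N1 (Hq n) Ss Hsq.
Qed.
End Stage.

Lemma sorted_app_nseq (d : Order.disp_t) (I : orderType d) (l : seq I) (s : I) k :
  sorted (fun a b => (a <= b)%O) l -> (forall s', s' \in l -> (s' < s)%O) ->
  sorted (fun a b => (a <= b)%O) (l ++ nseq k s).
Proof.
have tr : transitive (fun a b : I => (a <= b)%O) by move=> ? ? ?; apply: le_trans.
have Hn : sorted (fun a b : I => (a <= b)%O) (nseq k s).
  elim: k => [|k IH] //=; case: k IH => [|k] //= IH; rewrite lexx /=; exact: IH.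
elim: l => [|a l IH] //= Hs Hl.
rewrite (path_sortedE tr) in Hs *; case/andP: Hs => Ha Hs.
rewrite (path_sortedE tr) all_cat Ha IH // ?andbT /=.
  rewrite all_nseq; apply/orP; right; apply: ltW; apply: Hl; exact: mem_head.
by move=> s' Hs'; apply: Hl; rewrite in_cons Hs' orbT.
Qed.

Section Part2.
Variables (d : Order.disp_t) (I : orderType d).
Hypothesis wf : well_founded (fun a b : I => (a < b)%O).
Variables (SS : pzRingType) (R : SS -> Prop) (xs : I -> SS)
            (Lt Le : I -> SS -> Prop) (alpha delta : I -> SS -> SS).
Hypothesis sR : subring R.
Hypothesis HLt : forall s h, Lt s h <-> R h \/ exists t, (t < s)%O /\ Le t h.
Hypothesis Hall : forall h, R h \/ exists t, Le t h.
Hypothesis Hore : forall s, is_ore_ext (Lt s) (Le s) (xs s) (alpha s) (delta s).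
Hypothesis HfLt : forall s, free_on R (Lt s) (std_terms xs (fun t => (t < s)%O)).
Hypothesis Hfree : free_on R (fun _ => True) (std_terms xs (fun _ => True)).

Let T := std_terms xs (fun _ => True).

Lemma RLe u h : R h -> Le u h.
Proof. by move=> Hh; apply: (oSE (Hore u)); apply/HLt; left. Qed.

Lemma LeLt a b h : (a < b)%O -> Le a h -> Lt b h.
Proof. by move=> Hab Hh; apply/HLt; right; exists a. Qed.

Lemma Lemono a b h : (a <= b)%O -> Le a h -> Le b h.
Proof.
rewrite le_eqVlt => /orP [/eqP -> // | Hab] Hh.
by apply: (oSE (Hore b)); apply: LeLt Hab Hh.
Qed.

Lemma HTx s t k : std_terms xs (fun t => (t < s)%O) t -> T (t * xs s ^+ k).
Proof.
move=> [l [Hs [Hl ->]]]; exists (l ++ nseq k s); split; first exact: sorted_app_nseq.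
split => // ; rewrite big_cat /=; congr (_ * _).
elim: k => [|k IH]; first by rewrite big_nil expr0.
by rewrite /= big_cons -IH exprS.
Qed.

Definition PP t := forall g f, nice R T g -> Le t g -> Le t f -> f * g = 0 ->
  lspan (Le t) (ann R g) f.

Lemma combine (Z : SS -> Prop) (D : I -> Prop) :
  (forall u, D u -> PP u) -> (forall u h, D u -> Le u h -> Z h) -> Z 1 ->
  forall p f, nice R T p -> (R p \/ exists u, D u /\ Le u p) ->
  (R f \/ exists u, D u /\ Le u f) -> f * p = 0 -> lspan Z (ann R p) f.
Proof.
move=> HP HZ Z1 p f Hp Hpd Hfd Hfp.
have mono u : D u -> lspan (Le u) (ann R p) f -> lspan Z (ann R p) f.
  by move=> Du; apply: lspan_mono => // h; apply: HZ.
case: Hpd => [Rp | [u1 [D1 L1]]]; case: Hfd => [Rf | [u2 [D2 L2]]].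
- exists [:: (1, f)]; split; last by rewrite /lcomb big_cons big_nil mul1r addr0.
  by move=> q; rewrite inE => /eqP -> /=.
- by apply: (mono u2 D2); apply: HP => //; apply: RLe.
- by apply: (mono u1 D1); apply: HP => //; apply: RLe.
- case: (leP u1 u2) => H12.
    by apply: (mono u2 D2); apply: HP => //; apply: Lemono H12 L1.
  by apply: (mono u1 D1); apply: HP => //; apply: Lemono (ltW H12) L2.
Qed.

Lemma allPP t : PP t.
Proof.
elim/(well_founded_ind wf): t => t IH.
move=> g f; apply: (stage sR Hfree (HfLt t) (Hore t) (@HTx t)).
move=> p f' Hp Lp Lf Hfp.
apply: (combine (D := fun u => (u < t)%O)) => //.
- by move=> u h Hu Hh; apply: LeLt Hu Hh.
- by apply/HLt; left; apply: sub1.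
- by move/HLt: Lp.
- by move/HLt: Lf.
Qed.

Lemma part2 g : nice R T g -> same_set (ann (fun _ => True) g) (lspan (fun _ => True) (ann R g)).
Proof.
move=> Hg h; split => [[_ Hhg] | Hh]; last by split => //; exact: lspan_ann Hh.
apply: (combine (D := fun _ => True)) => //.
- by move=> u _; apply: allPP.
- case: (Hall g) => [? | [u ?]]; [by left | by right; exists u].
- case: (Hall h) => [? | [u ?]]; [by left | by right; exists u].
Qed.
End Part2.

Theorem mainTheorem10 :
  (* (1) *)
  (forall (A : pzRingType) (R S TS : A -> Prop) (x : A) (alpha delta : A -> A),
     subring R -> (forall r, R r -> S r) -> free_on R S TS ->
     is_ore_ext S (fun _ => True) x alpha delta ->
     forall g p : A, g != 0 -> is_lc S x g p ->
       nice R TS p ->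
       same_set (ann R p) (ann R g) ->
       same_set (ann S p) (lspan S (ann R p)) ->
       same_set (ann (fun _ => True) g) (lspan (fun _ => True) (ann R g)))
  /\
  (* (2) *)
  (forall (d : Order.disp_t) (I : orderType d),
     well_founded (fun a b : I => (a < b)%O) ->
     forall (SS : pzRingType) (R : SS -> Prop) (xs : I -> SS)
            (Lt Le : I -> SS -> Prop) (alpha delta : I -> SS -> SS),
     subring R ->
     (* S_s = R ∪ ⋃_{t<s} S_{t+1}  (S_0 = R, successor, limit) *)
     (forall s h, Lt s h <-> R h \/ exists t, (t < s)%O /\ Le t h) ->
     (* S_Omega = whole ring *)
     (forall h, R h \/ exists t, Le t h) ->
     (* S_{s+1} = S_s[x_s; alpha_s, delta_s] *)
     (forall s, is_ore_ext (Lt s) (Le s) (xs s) (alpha s) (delta s)) ->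
     (* S_kappa free left R-module on T_kappa *)
     (forall s, free_on R (Lt s) (std_terms xs (fun t => (t < s)%O))) ->
     (forall s, free_on R (Le s) (std_terms xs (fun t => (t <= s)%O))) ->
     free_on R (fun _ => True) (std_terms xs (fun _ => True)) ->
     forall g : SS, nice R (std_terms xs (fun _ => True)) g ->
       same_set (ann (fun _ => True) g) (lspan (fun _ => True) (ann R g))).
Proof.
split.
- move=> A R S TS x alpha delta sR _ _ Hore g p _ [n [q [Hq [Hg [_ ->]]]]] _ HRp HSp h.
  split => [[_ Hhg] | Hh]; last by split => //; exact: lspan_ann Hh.
  apply: (core Hore Hq Hg _ I Hhg) => s Ss Hsq.
  have /HSp Hs : ann S (q n) s by [].
  by apply: (lspan_mono (fun b (hb : S b) => hb) _ Hs) => b /HRp.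
- move=> d I wf SS R xs Lt Le alpha delta sR HLt Hall Hore HfLt _ Hfree g Hg.
  exact: (part2 wf sR HLt Hall Hore HfLt Hfree Hg).
Qed.
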